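(* Suppose DEIC holds and let $\psi_{\mathcal{I}}=\lambda_{\min}\bar\rho/3$. Let $\xi>0$. For any $\boldsymbol{\delta}=(\boldsymbol{\delta}_0,\dots,\boldsymbol{\delta}_G)\in\mathcal{H}$, with $\boldsymbol{\delta}_{0g}=\boldsymbol{\delta}_0+\boldsymbol{\delta}_g$ and $\xi_g=\xi\|\boldsymbol{\delta}_{0g}\|_2$, $$\sum_{g=1}^G\frac{n_g}{n}\,\xi_g\,Q_{2\xi_g}(\boldsymbol{\delta}_{0g})\ge\psi_{\mathcal{I}}\,\xi\,\frac{(\alpha-2\xi)^2}{4ck^2}\Big(\|\boldsymbol{\delta}_0\|_2+\sum_{g=1}^G\frac{n_g}{n}\|\boldsymbol{\delta}_g\|_2\Big),$$ and consequently $\inf_{\boldsymbol{\delta}\in\mathcal{H}}\sum_{g=1}^G\frac{n_g}{n}\xi_gQ_{2\xi_g}(\boldsymbol{\delta}_{0g})$ is bounded below by the same right-hand side expression.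
   Context: Let $\mathbf{x}\in\mathbb{R}^p$ be a zero-mean isotropic ($\mathbb{E}\mathbf{x}\mathbf{x}^T=I_p$) sub-Gaussian random vector with sub-Gaussian norm $\|\mathbf{x}\|_{\psi_2}\le k$ and $\alpha>0$ such that $\mathbb{E}|\langle\mathbf{x},\mathbf{u}\rangle|\ge\alpha$ for all $\mathbf{u}\in\mathbb{S}^{p-1}$; $c>0$ is an absolute constant such that $\mathbb{P}(|\langle\mathbf{x},\mathbf{u}\rangle|>2\xi)\ge(\alpha-2\xi)^2/(4ck^2)$ for all unit $\mathbf{u}$. Tail function: $Q_{s}(\mathbf{v})=\mathbb{P}(|\langle\mathbf{x},\mathbf{v}\rangle|>s)$. Groups $g=1,\dots,G$ with sizes $n_g$, $n=\sum_gn_g$, $n_0:=n$. For $g\in\{0,\dots,G\}$, $\mathcal{C}_g\subseteq\mathbb{R}^p$ are the error cones (cone generated by $\{\boldsymbol{\delta}:f_g(\boldsymbol{\beta}_g^*+\boldsymbol{\delta})\le f_g(\boldsymbol{\beta}_g^* )\}$ for convex $f_g$), and $\mathcal{H}=\{(\boldsymbol{\delta}_0,\dots,\boldsymbol{\delta}_G):\boldsymbol{\delta}_g\in\mathcal{C}_g,\ \sum_{g=0}^G\frac{n_g}{n}\|\boldsymbol{\delta}_g\|_2=1\}$. DEIC: there exist $\mathcal{I}\subseteq\{1,\dots,G\}$, $0\le\bar\rho\le1$, $\lambda_{\min}>0$ with $\sum_{i\in\mathcal{I}}n_i\ge\lceil\bar\rho n\rceil$ and $\|\boldsymbol{\delta}_i+\boldsymbol{\delta}_0\|_2\ge\lambda_{\min}(\|\boldsymbol{\delta}_0\|_2+\|\boldsymbol{\delta}_i\|_2)$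 for all $i\in\mathcal{I}$, $\boldsymbol{\delta}_i\in\mathcal{C}_i$, $\boldsymbol{\delta}_0\in\mathcal{C}_0$. *)

(* Defs.v *)
From HB Require Import structures.
From mathcomp Require Import all_boot all_order all_algebra.
From mathcomp Require Import all_classical all_reals all_analysis.
Set Implicit Arguments. Unset Strict Implicit. Unset Printing Implicit Defensive.
Import Order.TTheory GRing.Theory Num.Theory.
Local Open Scope classical_set_scope.
Local Open Scope ring_scope.

Section Defs.
Context {R : realType} {p : nat}.

Definition dotp (u v : 'rV[R]_p) : R := \sum_(i < p) u 0 i * v 0 i.
Definition norm2 (v : 'rV[R]_p) : R := Num.sqrt (dotp v v).
Definition unit_sphere : set 'rV[R]_p := [set u | norm2 u = 1].

Definition convex_fun (f : 'rV[R]_p -> R) : Prop :=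
  forall (a b : 'rV[R]_p) (t : R), 0 <= t -> t <= 1 ->
    f (t *: a + (1 - t) *: b) <= t * f a + (1 - t) * f b.

Definition error_cone (f : 'rV[R]_p -> R) (beta : 'rV[R]_p) : set 'rV[R]_p :=
  [set d | exists (t : R) (s : 'rV[R]_p),
      0 <= t /\ f (beta + s) <= f beta /\ d = t *: s].
End Defs.

Section Prob.
Context {d : measure_display} {T : measurableType d} {R : realType} {p : nat}.
Variable P : probability T R.
Local Open Scope ereal_scope.

(* sub-Gaussian (psi_2) norm of a real random variable:
   inf { t > 0 | E exp (Y^2 / t^2) <= 2 }  (in \bar R, inf of empty = +oo) *)
Definition psi2_norm (Y : T -> R) : \bar R :=
  ereal_inf [set t%:E | t in [set t : R | (0 < t)%R /\
     'E_P[fun w => expR (Y w ^+ 2 / t ^+ 2)] <= 2%:E]].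

Definition psi2_norm_vec (x : T -> 'rV[R]_p) : \bar R :=
  ereal_sup [set psi2_norm (fun w => dotp (x w) u) | u in unit_sphere].

Definition Qtail (x : T -> 'rV[R]_p) (s : R) (v : 'rV[R]_p) : R :=
  fine (P [set w | (s < `|dotp (x w) v|)%R]).
End Prob.

(* Main.v *)
Require Import Defs.
From HB Require Import structures.
From mathcomp Require Import all_boot all_order all_algebra.
From mathcomp Require Import all_classical all_reals all_analysis.
From mathcomp Require Import ring lra.
Import Order.TTheory GRing.Theory Num.Theory.
Local Open Scope classical_set_scope.
Local Open Scope ring_scope.

Section H.
Context {R : realType} {p : nat}.
Implicit Types u v : 'rV[R]_p.

Lemma dotpC u v : dotp u v = dotp v u.
Proof. by rewrite /dotp; apply: eq_bigr => i _; rewrite mulrC. Qed.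
Lemma dotpZl a u v : dotp (a *: u) v = a * dotp u v.
Proof. by rewrite /dotp mulr_sumr; apply: eq_bigr => i _; rewrite mxE mulrA. Qed.
Lemma dotpZr a u v : dotp u (a *: v) = a * dotp u v.
Proof. by rewrite dotpC dotpZl dotpC. Qed.
Lemma dotpDl u v w : dotp (u + v) w = dotp u w + dotp v w.
Proof. by rewrite /dotp -big_split; apply: eq_bigr => i _; rewrite mxE mulrDl. Qed.
Lemma dotpDr u v w : dotp w (u + v) = dotp w u + dotp w v.
Proof. by rewrite !(dotpC w) dotpDl. Qed.
Lemma dotpNl u v : dotp (- u) v = - dotp u v.
Proof. by rewrite -scaleN1r dotpZl mulN1r. Qed.
Lemma dotpNr u v : dotp u (- v) = - dotp u v.
Proof. by rewrite dotpC dotpNl dotpC. Qed.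
Lemma dotp_ge0 u : 0 <= dotp u u.
Proof. by apply: sumr_ge0 => i _; rewrite -expr2 sqr_ge0. Qed.
Lemma norm2_ge0 u : 0 <= norm2 u.
Proof. exact: sqrtr_ge0. Qed.
Lemma norm2_sqr u : norm2 u ^+ 2 = dotp u u.
Proof. by rewrite /norm2 sqr_sqrtr // dotp_ge0. Qed.
Lemma norm2Z a u : norm2 (a *: u) = `|a| * norm2 u.
Proof. by rewrite /norm2 dotpZl dotpZr mulrA -expr2 sqrtrM ?sqr_ge0 // sqrtr_sqr. Qed.
Lemma norm2N u : norm2 (- u) = norm2 u.
Proof. by rewrite -scaleN1r norm2Z normrN1 mul1r. Qed.

Lemma dotp_eq0 u : dotp u u = 0 -> forall v, dotp u v = 0.
Proof.
move=> /eqP; rewrite /dotp psumr_eq0; last by move=> i _; rewrite -expr2 sqr_ge0.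
move=> /allP H v; apply: big1 => i _.
have := H i (mem_index_enum i); rewrite /= mulf_eq0 orbb => /eqP ->.
by rewrite mul0r.
Qed.

Lemma CS u v : dotp u v <= norm2 u * norm2 v.
Proof.
set A := norm2 u; set B := norm2 v.
have hA : 0 <= A by exact: norm2_ge0.
have hB : 0 <= B by exact: norm2_ge0.
have [A0|Apos] := eqVneq A 0.
  have : dotp u u = 0 by rewrite -norm2_sqr -/A A0 expr0n.
  by move=> /dotp_eq0 ->; rewrite mulr_ge0.
have [B0|Bpos] := eqVneq B 0.
  have : dotp v v = 0 by rewrite -norm2_sqr -/B B0 expr0n.
  by move=> /dotp_eq0 h; rewrite dotpC h mulr_ge0.
have h := dotp_ge0 (B *: u - A *: v).
rewrite dotpDl !dotpDr !dotpNl !dotpNr !dotpZl !dotpZr (dotpC v u) in h.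
rewrite -!norm2_sqr -/A -/B in h.
have AB : 0 < A * B by rewrite mulr_gt0 // lt0r ?Apos ?Bpos.
have : 0 <= (A * B) * (2 * (A * B - dotp u v)).
  move: h; set D := dotp u v => h.
  by apply: le_trans h _; rewrite le_eqVlt; apply/orP; left; apply/eqP; ring.
by rewrite pmulr_rge0 // pmulr_rge0 // subr_ge0.
Qed.

Lemma norm2_tri u v : norm2 (u + v) <= norm2 u + norm2 v.
Proof.
rewrite -(ler_pXn2r (n:=2)) ?nnegrE ?addr_ge0 ?norm2_ge0 //.
rewrite norm2_sqr dotpDl !dotpDr (dotpC v u) sqrrD !norm2_sqr.
have := CS u v; lra.
Qed.
End H.
Lemma meas_set (d : measure_display) (T : measurableType d) (R : realType)
  (p : nat) (x : T -> 'rV[R]_p)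
  (Hxmeas : forall i : 'I_p, measurable_fun setT (fun w => x w ord0 i))
  (u : 'rV[R]_p) (s : R) :
  measurable [set w | s < `|dotp (x w) u|].
Proof.
have mg : measurable_fun setT (fun w => `|dotp (x w) u|).
  apply: measurableT_comp; first exact: measurable_realfun.normr_measurable.
  rewrite /dotp; apply: measurable_sum => i.
  apply: measurable_realfun.measurable_funM; last exact: measurable_cst.
  have -> : (0 : 'I_1) = ord0 by apply: val_inj.
  exact: Hxmeas.
have := mg measurableT _ (measurable_itv `]s, +oo[).
rewrite setTI; congr measurable; apply/seteqP; split => w /=;
  by rewrite in_itv /= andbT.
Qed.

Lemma Qbound (d : measure_display) (T : measurableType d) (R : realType)
  (P : probability T R) (p : nat) (x : T -> 'rV[R]_p) (eta xi : R)
  (Hxmeas : forall i : 'I_p, measurable_fun setT (fun w => x w ord0 i))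
  (Hxi : 0 < xi)
  (HPZ : forall u, unit_sphere u ->
     ((eta)%:E <= P [set w | (2 * xi < `|dotp (x w) u|)%R])%E)
  (v : 'rV[R]_p) (hv : 0 < norm2 v) :
  eta <= Qtail P x (2 * (xi * norm2 v)) v.
Proof.
set N := norm2 v.
set u := N^-1 *: v.
have hu : unit_sphere u.
  by rewrite /unit_sphere /= /u norm2Z ger0_norm ?invr_ge0 ?ltW // mulVf // gt_eqF.
have HA : [set w | 2 * (xi * N) < `|dotp (x w) v|] =
          [set w | 2 * xi < `|dotp (x w) u|].
  apply: eq_set => w; rewrite /u dotpZr normrM ger0_norm ?invr_ge0 ?ltW //.
  by rewrite ltr_pdivlMl // [N * _]mulrC mulrA.
have := HPZ _ hu; rewrite /Qtail HA.
set A := P _.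
have mA : measurable [set w | 2 * xi < `|dotp (x w) u|] by exact: meas_set.
have A1 : (A <= 1)%E by exact: probability_le1.
have A0 : (0 <= A)%E by exact: measure_ge0.
have fA : A \is a fin_num by rewrite ge0_fin_numE // (le_lt_trans A1) // ltry.
by rewrite -(fineK fA) lee_fin.
Qed.

Lemma comb (R : realType) (G : nat) (w t b : nat -> R) (a lmin rho : R) (I : pred nat)
  (ha : 0 <= a) (hw : forall g, 0 <= w g) (hb : forall g, 0 <= b g)
  (ht : forall g, 0 <= t g)
  (hsw : \sum_(1 <= g < G.+1) w g = 1)
  (hs : a + \sum_(1 <= g < G.+1) w g * b g = 1)
  (htri : forall g, b g - a <= t g)
  (hI : forall g, I g -> lmin * (a + b g) <= t g)
  (hrho : rho <= \sum_(1 <= g < G.+1 | I g) w g)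
  (hl0 : 0 < lmin) (hl1 : lmin <= 1) (hr0 : 0 <= rho) (hr1 : rho <= 1) :
  lmin * rho / 3 <= \sum_(1 <= g < G.+1) w g * t g.
Proof.
have [a3|a3] := lerP (1/3) a.
  apply: (@le_trans _ _ (\sum_(1 <= g < G.+1 | I g) w g * (lmin * a))).
    rewrite -mulr_suml.
    have : 0 <= \sum_(1 <= g < G.+1 | I g) w g by apply: sumr_ge0.
    move: hrho; set S := \sum_(_ <= _ < _ | _) _ => hrho hS.
    have SL : 0 <= S * lmin by rewrite mulr_ge0 // ltW.
    apply: (@le_trans _ _ (S * lmin / 3)); first nra.
    have : 0 <= (S * lmin) * (a - 1/3) by rewrite mulr_ge0 // subr_ge0.
    nra.
  apply: (@le_trans _ _ (\sum_(1 <= g < G.+1 | I g) w g * t g)).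
    apply: ler_sum => g Ig; apply: ler_wpM2l => //.
    by apply: le_trans (hI g Ig); rewrite ler_pM2l // lerDl.
  rewrite [X in _ <= X](bigID I) /= lerDl; apply: sumr_ge0 => g _; exact: mulr_ge0.

apply: (@le_trans _ _ (\sum_(1 <= g < G.+1) lmin * (w g * (b g - a)))).
  rewrite -mulr_sumr.
  have -> : \sum_(1 <= g < G.+1) w g * (b g - a) = 1 - a - a.
    under eq_bigr do rewrite mulrBr.
    rewrite sumrB -mulr_suml hsw mul1r; lra.
  nra.
apply: ler_sum => g _.
rewrite mulrCA; apply: ler_wpM2l => //.
have := htri g; have := ht g; have := hb g.
case hIg: (I g).
  have := hI g hIg; nra.
nra.
Qed.
Theorem lemma2
  (* probability space and the random design vector x in R^p *)
  (d : measure_display) (T : measurableType d) (R : realType)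
  (P : probability T R) (p : nat) (x : T -> 'rV[R]_p) (k alpha c : R)
  (Hxmeas : forall i : 'I_p, measurable_fun setT (fun w => x w ord0 i))
  (Hmean : forall i : 'I_p, ('E_P[fun w => x w ord0 i] = 0)%E)
  (Hiso : forall i j : 'I_p,
     ('E_P[fun w => (x w ord0 i * x w ord0 j)%R] = ((i == j)%:R)%:E)%E)
  (Hsubg : (psi2_norm_vec P x <= k%:E)%E)
  (Halpha : 0 < alpha)
  (Hmom : forall u, unit_sphere u ->
     (alpha%:E <= 'E_P[fun w => (`|dotp (x w) u|)%R])%E)
  (Hc : 0 < c)
  (* groups 1..G with sizes nsz g, n = n_0 = sum of the group sizes *)
  (G : nat) (nsz : nat -> nat)
  (n := (\sum_(1 <= g < G.+1) nsz g)%N)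
  (* error cones C_g, g = 0..G, generated by convex functions f_g at beta*_g *)
  (f : nat -> 'rV[R]_p -> R) (beta : nat -> 'rV[R]_p)
  (Hconv : forall g, (g <= G)%N -> convex_fun (f g))
  (* DEIC *)
  (I : pred nat) (rho lmin : R)
  (HI : forall i, I i -> (1 <= i <= G)%N)
  (Hrho : 0 <= rho <= 1)
  (Hlmin : 0 < lmin <= 1)
  (HIsize : Num.ceil (rho * n%:R) <= ((\sum_(1 <= i < G.+1 | I i) nsz i)%N)%:Z)
  (HDEIC : forall i, I i -> forall di d0 : 'rV[R]_p,
     error_cone (f i) (beta i) di -> error_cone (f 0%N) (beta 0%N) d0 ->
     lmin * (norm2 d0 + norm2 di) <= norm2 (di + d0))
  (* xi and the small-ball constant c *)
  (xi : R) (Hxi : 0 < xi)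
  (HPZ : forall u, unit_sphere u ->
     (((alpha - 2 * xi) ^+ 2 / (4 * c * k ^+ 2))%:E
        <= P [set w | (2 * xi < `|dotp (x w) u|)%R])%E) :
  let C g := error_cone (f g) (beta g) in
  let nw g := (if g == 0%N then n else nsz g)%:R / n%:R in
  let H := [set delta : nat -> 'rV[R]_p |
              (forall g, (g <= G)%N -> C g (delta g)) /\
              \sum_(0 <= g < G.+1) nw g * norm2 (delta g) = 1] in
  let psiI := lmin * rho / 3 in
  let LHS (delta : nat -> 'rV[R]_p) :=
    \sum_(1 <= g < G.+1)
      let d0g := delta 0%N + delta g in
      let xig := xi * norm2 d0g in
      (nsz g)%:R / n%:R * xig * Qtail P x (2 * xig) d0g in
  (forall delta, H delta ->
     psiI * xi * ((alpha - 2 * xi) ^+ 2 / (4 * c * k ^+ 2)) *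
       (norm2 (delta 0%N) + \sum_(1 <= g < G.+1) (nsz g)%:R / n%:R * norm2 (delta g))
     <= LHS delta) /\
  (forall delta, H delta ->
     psiI * xi * ((alpha - 2 * xi) ^+ 2 / (4 * c * k ^+ 2)) <= LHS delta).
Proof.
move=> C nw H psiI LHS.
set eta := (alpha - 2 * xi) ^+ 2 / (4 * c * k ^+ 2).
have eta0 : 0 <= eta.
  by rewrite divr_ge0 ?sqr_ge0 // mulr_ge0 ?sqr_ge0 // mulr_ge0 // ltW.
move/andP: Hrho => [hr0 hr1]; move/andP: Hlmin => [hl0 hl1].
have key : forall delta, H delta ->
   psiI * xi * eta <= LHS delta /\
   norm2 (delta 0%N) + \sum_(1 <= g < G.+1) (nsz g)%:R / n%:R * norm2 (delta g) = 1.
  move=> delta [hC hsum].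
  have n0 : n != 0%N.
    apply/negP => /eqP n0; move: hsum; rewrite /nw n0 big1 => [/eqP|g _].
      by rewrite eq_sym oner_eq0.
    by rewrite invr0 mulr0 mul0r.
  have npos : (0 : R) < n%:R by rewrite ltr0n lt0n.
  have hS : norm2 (delta 0%N) + \sum_(1 <= g < G.+1) (nsz g)%:R / n%:R * norm2 (delta g) = 1.
    move: hsum; rewrite big_ltn // /nw eqxx divff ?pnatr_eq0 // mul1r.
    rewrite (@eq_big_nat _ _ _ _ _ _ (fun g => (nsz g)%:R / n%:R * norm2 (delta g))) //.
    by move=> g /andP[g1 _]; rewrite (gtn_eqF g1).
  split => //.
  have hc := @comb R G (fun g => (nsz g)%:R / n%:R) (fun g => norm2 (delta 0%N + delta g))
     (fun g => norm2 (delta g)) (norm2 (delta 0%N)) lmin rho I (norm2_ge0 _)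
     (fun g => divr_ge0 (ler0n _ _) (ler0n _ _)) (fun g => norm2_ge0 _)
     (fun g => norm2_ge0 _).
  have := hc _ hS; clear hc => hc.
  have {}hc : lmin * rho / 3 <= \sum_(1 <= g < G.+1) (nsz g)%:R / n%:R * norm2 (delta 0%N + delta g).
    apply: hc => //.
    - by rewrite -mulr_suml -natr_sum divff // pnatr_eq0.
    - move=> g; have := norm2_tri (delta 0%N + delta g) (- delta 0%N).
      by rewrite addrC addKr norm2N; lra.
    - move=> g Ig; have /andP[_ gG] := HI g Ig.
      have := HDEIC g Ig (delta g) (delta 0%N) (hC g gG) (hC 0%N isT).
      by rewrite [delta g + _]addrC.
    - rewrite -mulr_suml -natr_sum ler_pdivlMr //.
      apply: le_trans (ceil_ge _) _.
      have h : ((Num.ceil (rho * n%:R))%:~R : R) <=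
               (((\sum_(1 <= i < G.+1 | I i) nsz i)%N)%:Z)%:~R by rewrite ler_int.
      exact: h.
  apply: (@le_trans _ _ (\sum_(1 <= g < G.+1)
      (nsz g)%:R / n%:R * (xi * norm2 (delta 0%N + delta g)) * eta)).
    rewrite -mulr_suml.
    under eq_bigr do rewrite mulrCA.
    rewrite -mulr_sumr /psiI.
    have : 0 <= xi * eta by rewrite mulr_ge0 // ltW.
    move: hc; set S := \sum_(_ <= _ < _) _ => hc hxe.
    have := ler_wpM2r hxe hc.
    by rewrite !mulrA [xi * S]mulrC.
  rewrite /LHS; apply: ler_sum => g _ /=.
  set v := delta 0%N + delta g.
  have [v0|vpos] := eqVneq (norm2 v) 0.
    by rewrite v0 !mulr0 !mul0r.
  apply: ler_wpM2l.
    by rewrite mulr_ge0 ?divr_ge0 ?mulr_ge0 ?norm2_ge0 // ltW.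
  apply: (@Qbound _ _ _ P _ x eta xi Hxmeas Hxi HPZ).
  by rewrite lt0r vpos norm2_ge0.
split => delta hd; have [h1 h2] := key delta hd => //.
by rewrite h2 mulr1.
Qed.
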